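(* Let $p$ be an odd prime, let $L/\mathbb{Q}_p$ be a finite unramified extension with ring of integers $\mathcal{O}_L$ and maximal ideal $\mathfrak{m}_L$. Let $F\in \mathcal{O}_L\langle\langle t\rangle\rangle$ be non-zero. Then $F$ has only finitely many zeroes in $\mathfrak{m}_L$. Moreover, if $k\ge 1$ and the reduction $\overline{F}\in (\mathcal{O}_L/\mathfrak{m}_L^k)\langle\langle t\rangle\rangle$ is non-zero, then the number of zeroes of $F$ in $\mathfrak{m}_L$ is bounded by a constant depending only on $\overline{F}$; that is, for every $k\ge1$ and every non-zero $G\in(\mathcal{O}_L/\mathfrak{m}_L^k)\langle\langle t\rangle\rangle$ there is $N(G)$ such that every $F\in\mathcal{O}_L\langle\langle t\rangle\rangle$ with $\overline{F}=G$ has at most $N(G)$ zeroes in $\mathfrak{m}_L$.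
   Context: For a commutative ring $R$, the divided power algebra $R\langle\langle t\rangle\rangle$ consists of formal sums $\sum_{n\ge0} a_n t^{[n]}$ with $a_n\in R$, with multiplication $t^{[n]}t^{[m]}=\binom{n+m}{n}t^{[n+m]}$. For $R=\mathcal{O}_L$ we regard $\mathcal{O}_L\langle\langle t\rangle\rangle$ as a subring of $L[[t]]$ via $t^{[n]}\mapsto t^n/n!$; such series converge on $\mathfrak{m}_L$ (as $p$ is odd and $L$ unramified), and a zero of $F$ in $\mathfrak{m}_L$ means a point $x\in\mathfrak{m}_L$ with $F(x)=\sum a_n x^n/n!=0$. The reduction map $\mathcal{O}_L\langle\langle t\rangle\rangle\to(\mathcal{O}_L/\mathfrak{m}_L^k)\langle\langle t\rangle\rangle$, $F\mapsto\overline{F}$, reduces each coefficient $a_n$ modulo $\mathfrak{m}_L^k$ and sends $t^{[n]}\mapsto t^{[n]}$. *)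

(* Defs.v *)
From mathcomp Require Import all_boot all_order all_algebra.
Set Implicit Arguments. Unset Strict Implicit. Unset Printing Implicit Defensive.
Import Order.TTheory GRing.Theory Num.Theory.
Local Open Scope ring_scope.

(* A finite unramified extension L of Q_p is described intrinsically as a
   field L with a (normalised) absolute value abs : L -> rat such that
   - abs is multiplicative and ultrametric, abs x = 0 iff x = 0,
   - every non-zero value is an integral power of p (discrete valuation
     whose value group is generated by |p|, i.e. p is a uniformiser:
     unramified), and |p| = 1/p,
   - the residue field O_L / m_L is finite,
   - L is complete.
   (Such fields are exactly the finite unramified extensions of Q_p.) *)
Definition unram_padic_field (p : nat) (L : fieldType) (abs : L -> rat) : Prop :=
  abs 0 = 0 /\
  (forall x : L, x != 0 -> exists n : int, abs x = (p%:Q) ^ n) /\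
  (forall x y : L, abs (x * y) = abs x * abs y) /\
  (forall x y : L, abs (x + y) <= Num.max (abs x) (abs y)) /\
  abs (p%:R) = (p%:Q)^-1 /\
  (exists s : seq L, (forall y, y \in s -> abs y <= 1) /\
     forall x, abs x <= 1 -> exists2 y, y \in s & abs (x - y) < 1) /\
  (forall u : nat -> L,
     (forall eps : rat, 0 < eps -> exists N : nat,
        forall m n, (N <= m)%N -> (N <= n)%N -> abs (u m - u n) < eps) ->
     exists l : L, forall eps : rat, 0 < eps -> exists N : nat,
        forall n, (N <= n)%N -> abs (u n - l) < eps).

Definition has_sum (L : fieldType) (abs : L -> rat) (u : nat -> L) (s : L) : Prop :=
  forall eps : rat, 0 < eps -> exists N : nat,
    forall n, (N <= n)%N -> abs (\sum_(i < n) u i - s) < eps.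

(* An element F = sum_n a_n t^[n] of O_L<<t>> is given by its coefficient
   sequence a with all |a n| <= 1. *)
Definition integral_dp (L : fieldType) (abs : L -> rat) (a : nat -> L) : Prop :=
  forall n, abs (a n) <= 1.

Definition dp_zero (L : fieldType) (abs : L -> rat) (a : nat -> L) (x : L) : Prop :=
  abs x < 1 /\ has_sum abs (fun n => a n * x ^+ n / (n`!)%:R) 0.

(* reductions modulo m_L^k = p^k O_L agree: a n = b n mod m_L^k for all n *)
Definition same_reduction (p : nat) (L : fieldType) (abs : L -> rat) (k : nat)
  (a b : nat -> L) : Prop :=
  forall n, abs (a n - b n) <= ((p%:Q) ^+ k)^-1.

Definition reduction_nonzero (p : nat) (L : fieldType) (abs : L -> rat) (k : nat)
  (b : nat -> L) : Prop :=
  exists n, ((p%:Q) ^+ k)^-1 < abs (b n).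

(* Main.v *)
Require Import Defs.
From mathcomp Require Import all_boot all_order all_algebra.
From mathcomp Require Import qpoly zify ring.
From Stdlib Require Import Classical.
Import Order.TTheory GRing.Theory Num.Theory.
Local Open Scope ring_scope.

Section S.
Variables (p : nat) (L : fieldType) (abs : L -> rat).
Hypothesis pp : prime p.
Hypothesis abs0 : abs 0 = 0.
Hypothesis absP : forall x : L, x != 0 -> exists n : int, abs x = (p%:Q) ^ n.
Hypothesis absM : forall x y : L, abs (x * y) = abs x * abs y.
Hypothesis absD : forall x y : L, abs (x + y) <= Num.max (abs x) (abs y).
Hypothesis absp : abs (p%:R) = (p%:Q)^-1.

Lemma p_gt0 : (0 : rat) < p%:Q.
Proof. by rewrite ltr0n prime_gt0. Qed.

Lemma abs_gt0 x : x != 0 -> 0 < abs x.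
Proof. by move=> /absP [n ->]; apply: exprz_gt0; apply: p_gt0. Qed.

Lemma abs_ge0 x : 0 <= abs x.
Proof.
have [->|x0] := eqVneq x 0; first by rewrite abs0.
by apply: ltW; apply: abs_gt0.
Qed.

Lemma abs1 : abs 1 = 1.
Proof.
have h := absM 1 1; rewrite mul1r in h.
have g : 0 < abs 1 by apply: abs_gt0; exact: oner_neq0.
have : abs 1 * (abs 1 - 1) = 0 by rewrite mulrBr mulr1 -h subrr.
by move/eqP; rewrite mulf_eq0 (gt_eqF g) /= subr_eq0 => /eqP.
Qed.

Lemma absN1 : abs (-1) = 1.
Proof.
have h := absM (-1) (-1); rewrite mulrNN mulr1 abs1 in h.
have g : 0 < abs (-1) by apply: abs_gt0; rewrite oppr_eq0 oner_neq0.
have : (abs (-1) - 1) * (abs (-1) + 1) = 0.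
  by rewrite mulrBl !mulrDr !mulr1 mul1r -h; rewrite opprD addrA addrK subrr.
move/eqP; rewrite mulf_eq0 subr_eq0 => /orP [/eqP //|].
by rewrite gt_eqF // ltr_pwDl.
Qed.

Lemma absN x : abs (- x) = abs x.
Proof. by rewrite -mulN1r absM absN1 mul1r. Qed.

Lemma absB x y : abs (x - y) = abs (y - x).
Proof. by rewrite -absN opprB. Qed.

Lemma absX x n : abs (x ^+ n) = abs x ^+ n.
Proof. by elim: n => [|n IH]; rewrite ?expr0 ?abs1 // !exprS absM IH. Qed.

Lemma absV x : abs (x^-1) = (abs x)^-1.
Proof.
have [->|x0] := eqVneq x 0; first by rewrite invr0 abs0 invr0.
have g := abs_gt0 x x0.
apply: (mulfI (lt0r_neq0 g)); rewrite -absM mulfV // abs1 mulfV //.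
exact: lt0r_neq0.
Qed.

Lemma absD_le x y B : abs x <= B -> abs y <= B -> abs (x + y) <= B.
Proof. by move=> hx hy; apply: le_trans (absD x y) _; rewrite ge_max hx hy. Qed.

Lemma absD_lt x y B : abs x < B -> abs y < B -> abs (x + y) < B.
Proof. by move=> hx hy; apply: le_lt_trans (absD x y) _; rewrite gt_max hx hy. Qed.

Lemma abs_sum_le (I : Type) (r : seq I) (P : pred I) (F : I -> L) B :
  0 <= B -> (forall i, P i -> abs (F i) <= B) -> abs (\sum_(i <- r | P i) F i) <= B.
Proof.
move=> B0 h; apply: (big_ind (fun z => abs z <= B)) => //; first by rewrite abs0.
by move=> x y; apply: absD_le.
Qed.

Lemma abs_sum_lt (I : Type) (r : seq I) (P : pred I) (F : I -> L) B :
  0 < B -> (forall i, P i -> abs (F i) < B) -> abs (\sum_(i <- r | P i) F i) < B.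
Proof.
move=> B0 h; apply: (big_ind (fun z => abs z < B)) => //; first by rewrite abs0.
by move=> x y; apply: absD_lt.
Qed.

Lemma abs_nat n : abs n%:R <= 1.
Proof.
elim: n => [|n IH]; first by rewrite abs0 ler01.
by rewrite -addn1 natrD; apply: absD_le => //; rewrite abs1.
Qed.

Lemma abs_lt1 x : abs x < 1 -> abs x <= (p%:Q)^-1.
Proof.
have [->|x0] := eqVneq x 0; first by rewrite abs0 invr_ge0 ler0n.
have p1 : (1 : rat) <= p%:Q by rewrite ler1n prime_gt0.
case: (absP x x0) => [[n|n] ->].
  by rewrite -exprnP => h; move: (exprn_ege1 n p1); rewrite leNgt h.
move=> _; rewrite NegzE -exprnN.
rewrite lef_pV2 ?posrE ?p_gt0 ?exprn_gt0 ?p_gt0 //.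
by rewrite exprS ler_peMr ?exprn_ege1 ?ler0n.
Qed.


Lemma p_neq0 : (p%:R : L) != 0.
Proof.
apply/negP => /eqP h; move: absp; rewrite h abs0 => /esym/eqP.
  by rewrite invr_eq0 pnatr_eq0 => /eqP p0; move: (prime_gt0 pp); rewrite p0.
Qed.

Lemma abs_coprime m : coprime p m -> abs m%:R = 1.
Proof.
move=> cop.
have [a _ hd] := Bezoutr m (prime_gt0 pp).
have g : gcdn m p = 1%N by rewrite gcdnC; apply/eqP.
rewrite g in hd.
have e : (1 + a * m = ((1 + a * m) %/ p) * p)%N by rewrite divnK.
have e' : (1 : L) + a%:R * m%:R = ((1 + a * m) %/ p)%:R * p%:R.
  by rewrite -[RHS]natrM -e natrD natrM.
have hlt : abs ((1 : L) + a%:R * m%:R) < 1.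
  rewrite e' absM absp; apply: le_lt_trans (_ : 1 * p%:Q^-1 < 1).
    by rewrite ler_wpM2r ?abs_nat // invr_ge0 ler0n.
  by rewrite mul1r invf_lt1 ?ltr1n ?prime_gt1 // ltr0n prime_gt0.
have hm := abs_nat m.
rewrite le_eqVlt in hm; case/orP: hm => [/eqP //|hm].
have ham : abs ((a%:R : L) * m%:R) < 1.
  by rewrite absM; apply: le_lt_trans hm; rewrite ler_piMl ?abs_ge0 ?abs_nat.
have : abs ((1 + (a%:R : L) * m%:R) + - (a%:R * m%:R)) < 1.
  by apply: absD_lt => //; rewrite absN.
by rewrite addrK abs1 ltxx.
Qed.

Lemma abs_pexp e : abs ((p ^ e)%:R) = (p%:Q ^+ e)^-1.
Proof. by rewrite natrX absX absp exprVn. Qed.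

Lemma abs_fact n : abs (n`!%:R) = (p%:Q ^+ logn p n`!)^-1.
Proof.
have [m cop e] := pfactor_coprime pp (fact_gt0 n).
by rewrite [in LHS]e natrM absM abs_coprime // abs_pexp mul1r.
Qed.

Lemma fact_neq0 n : (n`!%:R : L) != 0.
Proof.
apply/negP => /eqP h; move: (abs_fact n); rewrite h abs0 => /esym/eqP.
by rewrite invr_eq0 expf_eq0 pnatr_eq0 => /andP [_ /eqP p0]; move: (prime_gt0 pp); rewrite p0.
Qed.

Lemma logn_fact_le n : (2 < p)%N -> (2 * logn p n`! <= n)%N.
Proof.
move=> p3; rewrite logn_fact //.
suff h : forall K, (2 * \sum_(1 <= k < K.+1) n %/ p ^ k + n %/ p ^ K <= n)%N.
  by apply: leq_trans (h n); apply: leq_addr.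
elim=> [|K IH]; first by rewrite big_geq // expn0 divn1; lia.
rewrite big_nat_recr //=.
have h1 : (n %/ p ^ K.+1 * p <= n %/ p ^ K)%N by rewrite expnSr divnMA leq_divM.
move: IH h1; set q := (n %/ p ^ K)%N; set r := (n %/ p ^ K.+1)%N.
move=> IH h1; have h2 : (3 * r <= r * p)%N by rewrite [(r * p)%N]mulnC leq_mul2r p3 orbT.
lia.
Qed.


Definition intp (q : {poly L}) := forall j, abs q`_j <= 1.

Lemma intpM q r : intp q -> intp r -> intp (q * r).
Proof.
move=> hq hr j; rewrite coefM; apply: abs_sum_le => // i _.
by rewrite absM; apply: mulr_ile1; rewrite ?abs_ge0.
Qed.

Lemma intp1 : intp 1.
Proof. by move=> j; rewrite coef1; case: (j == 0%N); rewrite ?abs1 ?abs0. Qed.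

Lemma intpXsubC c : abs c <= 1 -> intp ('X - c%:P).
Proof.
move=> hc [|[|j]]; rewrite coefB coefX coefC /=.
- by rewrite sub0r absN.
- by rewrite subr0 abs1.
- by rewrite subr0 abs0.
Qed.

Section Core.
Variables (y : nat -> L) (N : nat).
Hypothesis hy : forall j, (j <= N)%N -> abs (y j) <= 1.

Definition ys := [seq y j | j <- iota 0 N.+1].
Definition PP := \prod_(a <- ys) ('X - a%:P).

Lemma PP_int : intp PP.
Proof.
rewrite /PP big_seq; apply: (big_ind intp); [exact: intp1|exact: intpM|].
move=> a /mapP [j]; rewrite mem_iota add0n => /andP [_ hj] ->.
by apply: intpXsubC; apply: hy.
Qed.

Lemma PP_size : size PP = N.+2.
Proof. by rewrite /PP (size_prod_XsubC _ id) size_map size_iota. Qed.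

Lemma PP_lead : PP`_N.+1 = 1.
Proof.
have := monic_prod_XsubC ys xpredT id.
by move/monicP; rewrite lead_coefE PP_size.
Qed.

Lemma PP_hi j : (N.+1 < j)%N -> PP`_j = 0.
Proof. by move=> hj; rewrite nth_default // PP_size. Qed.

Lemma PP_root j : (j <= N)%N -> PP.[y j] = 0.
Proof.
move=> hj; apply/rootP; rewrite /PP root_prod_XsubC.
by apply: map_f; rewrite mem_iota add0n.
Qed.

Fixpoint rr n := if n is n'.+1 then 'X * rr n' - (rr n')`_N *: PP else 1.

Lemma rr_root n j : (j <= N)%N -> (rr n).[y j] = y j ^+ n.
Proof.
move=> hj; elim: n => [|n IH] /=; first by rewrite hornerC expr0.
by rewrite hornerD hornerN hornerZ PP_root // mulr0 subr0 hornerM hornerX IH exprS.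
Qed.

Lemma rr_hi n j : (N < j)%N -> (rr n)`_j = 0.
Proof.
elim: n j => [|n IH] j hj /=.
  by rewrite coef1; case: j hj.
rewrite coefB coefXM coefZ; case: j hj => [//|j] hj /=.
have [->|ne] := eqVneq j N; first by rewrite PP_lead mulr1 subrr.
by rewrite IH ?PP_hi ?mulr0 ?subr0 // ltn_neqAle eq_sym ne -ltnS.
Qed.

Lemma rr_int n : intp (rr n).
Proof.
elim: n => [|n IH] /=; first exact: intp1.
move=> j; rewrite coefB coefXM coefZ.
apply: absD_le; last by rewrite absN absM; apply: mulr_ile1; rewrite ?abs_ge0 ?IH ?PP_int.
by case: (j == 0%N); rewrite ?abs0 ?ler01 ?IH.
Qed.

Lemma rr_small n : (n <= N)%N -> rr n = 'X^n.
Proof.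
elim: n => [|n IH] hn //=; rewrite IH ?(ltnW hn) // coefXn.
by rewrite eq_sym (ltn_eqF hn) scale0r subr0 exprS.
Qed.

Lemma combine n (Q : nat -> nat -> Prop) :
  (forall j, (j < n)%N -> exists M, forall m, (M <= m)%N -> Q j m) ->
  exists M, forall j m, (j < n)%N -> (M <= m)%N -> Q j m.
Proof.
elim: n => [|n IH] h; first by exists 0%N.
have [M1 h1] := IH (fun j hj => h j (ltnW hj)).
have [M2 h2] := h n (ltnSn n).
exists (maxn M1 M2) => j m; rewrite ltnS leq_eqVlt => /orP [/eqP -> | hj] hm.
  by apply: h2; apply: leq_trans hm; apply: leq_maxr.
by apply: h1 => //; apply: leq_trans hm; apply: leq_maxl.
Qed.

Lemma core (c : nat -> L) : injective y ->
  (forall n, (N < n)%N -> abs (c n) < abs (c N)) ->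
  (forall j, (j <= N)%N -> forall eps, 0 < eps -> exists M, forall m, (M <= m)%N ->
      abs (\sum_(i < m) c i * y j ^+ i) < eps) -> False.
Proof.
move=> yinj hc hS.
have cN0 : 0 < abs (c N) by apply: le_lt_trans (hc N.+1 (ltnSn N)); apply: abs_ge0.
pose R M := \sum_(i < M) c i *: rr i.
have RS M : (size (R M) <= N.+1)%N.
  apply/leq_sizeP => j hj; rewrite coef_sum big1 // => i _.
  by rewrite coefZ rr_hi ?mulr0.
have RH M j : (j <= N)%N -> (R M).[y j] = \sum_(i < M) c i * y j ^+ i.
  move=> hj; rewrite horner_sum; apply: eq_bigr => i _.
  by rewrite hornerZ rr_root.
pose lg := tnth (N.+1 .-lagrange y).
have RN M : (R M)`_N = \sum_(i < N.+1) (R M).[y i] * (lg i)`_N.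
  rewrite {1}(lagrange_gen (ltn0Sn N) yinj (RS M)) coef_sum.
  by apply: eq_bigr => i _; rewrite coefCM.
pose W := 1 + \sum_(i < N.+1) abs ((lg i)`_N).
have W0 : 0 < W by apply: (lt_le_trans ltr01); rewrite lerDl sumr_ge0 // => i _; apply: abs_ge0.
have lgW i : abs ((lg i)`_N) <= W.
  rewrite /W (bigD1 i) //= addrCA ler_wpDr // addr_ge0 ?ler01 // sumr_ge0 // => k _.
  exact: abs_ge0.
pose eps := abs (c N) / W.
have eps0 : 0 < eps by rewrite divr_gt0.
have [M0 hM0] := combine N.+1 (fun j m => abs (\sum_(i < m) c i * y j ^+ i) < eps)
  (fun j hj => hS j hj eps eps0).
pose M := maxn M0 N.+1.
have up : abs ((R M)`_N) < abs (c N).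
  rewrite RN.
  apply: abs_sum_lt => // i _.
  rewrite absM.
  rewrite RH; last by rewrite -ltnS.
  have hi := hM0 i M (ltn_ord i) (leq_maxl _ _).
  set S := abs (\sum_(i0 < M) _).
  have S0 : 0 <= S by apply: abs_ge0.
  apply: (@le_lt_trans _ _ (S * W)).
    by apply: ler_wpM2l.
  have -> : abs (c N) = eps * W by rewrite /eps divfK // lt0r_neq0.
  by rewrite ltr_pM2r.
have NM : (N < M)%N by apply: leq_maxr.
set o := Ordinal NM.
have low : (R M)`_N = c N + \sum_(i < M | i != o) c i * (rr i)`_N.
  rewrite /R coef_sum (bigD1 o) //=.
  rewrite coefZ rr_small // coefXn eqxx mulr1.
  by congr (_ + _); apply: eq_bigr => i _; rewrite coefZ.
have rest : abs (\sum_(i < M | i != o) c i * (rr i)`_N) < abs (c N).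
  apply: abs_sum_lt => // i hi.
  have [lt|gt|eq] := ltngtP i N.
  - by rewrite rr_small ?(ltnW lt) // coefXn (gtn_eqF lt) mulr0 abs0.
  - rewrite absM; apply: le_lt_trans (hc _ gt).
    by rewrite ler_piMr ?abs_ge0 ?rr_int.
  - have io : i = o by apply: val_inj => /=; rewrite eq.
    by move: hi; rewrite io eqxx.
have : abs ((R M)`_N + - \sum_(i < M | i != o) c i * (rr i)`_N) < abs (c N).
  by apply: absD_lt; rewrite ?absN.
by rewrite low addrK ltxx.
Qed.

End Core.


Lemma select (c : nat -> L) : forall d m,
  (forall n, (m + d <= n)%N -> abs (c n) < abs (c m)) ->
  exists N, (m <= N)%N /\ (N <= m + d)%N /\ forall n, (N < n)%N -> abs (c n) < abs (c N).
Proof.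
elim/ltn_ind => d IH m h.
case: (boolP [exists j : 'I_d, abs (c m) <= abs (c (m + j.+1))]).
  move=> /existsP [j hj].
  have hjd : (j < d)%N := ltn_ord j.
  have hlt : (d - j.+1 < d)%N by lia.
  have hh : forall n, ((m + j.+1) + (d - j.+1) <= n)%N -> abs (c n) < abs (c (m + j.+1)%N).
    by move=> n hn; apply: lt_le_trans hj; apply: h; lia.
  have [N [h1 [h2 h3]]] := IH _ hlt _ hh.
  by exists N; split; [lia|split; [lia|]].
move=> /existsPn hn; exists m; split=> //; split; first by apply: leq_addr.
move=> n hmn; have [hd|hd] := leqP (m + d) n; first by apply: h.
have hj : (n - m.+1 < d)%N by lia.
move: (hn (Ordinal hj)); rewrite /= -ltNge.
have e : (m + (n - m.+1).+1 = n)%N by lia.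
move=> h1; suff E : c n = c (m + (n - m.+1).+1)%N by rewrite E. by congr c; lia.
Qed.

Lemma fin_list (Z : L -> Prop) N0 :
  (forall s : seq L, uniq s -> (forall x, x \in s -> Z x) -> (size s <= N0)%N) ->
  exists s : seq L, forall x, Z x -> x \in s.
Proof.
move=> hb.
suff : forall d (s : seq L), uniq s -> (forall x, x \in s -> Z x) -> (N0 - size s <= d)%N ->
  exists s' : seq L, forall x, Z x -> x \in s'.
  by move/(_ N0 [::]); apply => //; rewrite subn0.
elim=> [|d IH] s us zs hd;
  case: (classic (exists x, Z x /\ x \notin s)) => [[x [zx nx]] | nox].
- have := hb (x :: s); rewrite /= nx us => /(_ isT).
  have : forall z, z \in x :: s -> Z z by move=> z; rewrite inE => /orP [/eqP -> //|]; apply: zs.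
  by move=> h /(_ h) /=; lia.
- exists s => x zx; apply/negPn/negP => nx; apply: nox; exists x; split => //.
- apply: (IH (x :: s)); rewrite /= ?nx ?us //; last by lia.
  by move=> z; rewrite inE => /orP [/eqP -> //|]; apply: zs.
- exists s => x zx; apply/negPn/negP => nx; apply: nox; exists x; split => //.
Qed.

Lemma abs_cm (a : nat -> L) m : abs (a m * p%:R ^+ m / (m`!)%:R) >= abs (a m) / p%:Q ^+ m.
Proof.
rewrite !absM absX absp absV exprVn.
rewrite ler_peMr ?mulr_ge0 ?abs_ge0 ?invr_ge0 ?exprn_ge0 ?ler0n //.
rewrite invf_ge1 ?abs_nat //.
by apply: abs_gt0; apply: fact_neq0.
Qed.

Lemma abs_cn (a : nat -> L) n : (2 < p)%N -> abs (a n) <= 1 ->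
  abs (a n * p%:R ^+ n / (n`!)%:R) <= (p%:Q ^+ (n - logn p n`!))^-1.
Proof.
move=> p3 han.
have hen : (logn p n`! <= n)%N by have := logn_fact_le n p3; lia.
rewrite !absM absX absp absV exprVn abs_fact invrK.
have pe : (p%:Q ^+ logn p n`!) != 0 by apply: expf_neq0; rewrite pnatr_eq0; apply/eqP => e0; move: pp; rewrite e0.
rewrite -mulrA.
have -> : (p%:Q ^- n * p%:Q ^+ logn p n`!) = (p%:Q ^+ (n - logn p n`!))^-1.
  rewrite -{1}(subnKC hen) exprD invfM mulrAC mulVf ?mul1r //.
rewrite -[X in _ <= X]mul1r ler_wpM2r //.
by rewrite invr_ge0 exprn_ge0 // ler0n.
Qed.


Lemma bound_main (p3 : (2 < p)%N) m (beta : rat) : 0 < beta ->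
  exists N0 : nat, forall a : nat -> L, integral_dp abs a -> beta <= abs (a m) ->
    forall s : seq L, uniq s -> (forall x, x \in s -> dp_zero abs a x) -> (size s <= N0)%N.
Proof.
move=> b0.
pose g := beta / p%:Q ^+ m.
have g0 : 0 < g by rewrite divr_gt0 // exprn_gt0 // p_gt0.
pose K := Num.Def.archi_bound (g^-1).
have hK : g^-1 < K%:R by apply: archi_boundP; rewrite invr_ge0 ltW.
exists (m + 2 * K)%N => a ha ham s us zs.
pose c n := a n * p%:R ^+ n / (n`!)%:R.
have cm : g <= abs (c m) by apply: le_trans (abs_cm a m); rewrite ler_wpM2r // invr_ge0 exprn_ge0 // ler0n.
have cn : forall n, (m + 2 * K <= n)%N -> abs (c n) < abs (c m).
  move=> n hn; apply: lt_le_trans cm.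
  apply: le_lt_trans (abs_cn a n p3 (ha n)) _.
  have he := logn_fact_le n p3.
  set e := logn p n`! in he *.
  have pos : 0 < p%:Q ^+ (n - e) by rewrite exprn_gt0 // p_gt0.
  rewrite -[g]invrK ltf_pV2 ?posrE ?invr_gt0 //.
  apply: lt_trans hK _.
  rewrite -natrX ltr_nat; apply: leq_trans (ltn_expl _ (prime_gt1 pp)).
  by lia.
have [N [h1 [h2 h3]]] := select c (2 * K) m cn.
apply: leq_trans h2; rewrite leqNgt; apply/negP => hsN.
pose y j := if (j <= N)%N then nth 0 s j / p%:R else p%:R^-1 ^+ j.
have zx j : (j <= N)%N -> dp_zero abs a (nth 0 s j).
  by move=> hj; apply: zs; apply: mem_nth; apply: leq_ltn_trans hj hsN.
have hy : forall j, (j <= N)%N -> abs (y j) <= 1.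
  move=> j hj; rewrite /y hj absM absV absp invrK.
  have [hx _] := zx j hj.
  have hx' := abs_lt1 _ hx.
  apply: (@le_trans _ _ (p%:Q^-1 * p%:Q)); first by rewrite ler_wpM2r // ltW // p_gt0.
  by rewrite mulVf // lt0r_neq0 // p_gt0.
have habsy : forall j, (N < j)%N -> abs (y j) = p%:Q ^+ j.
  by move=> j hj; rewrite /y leqNgt hj /= absX absV absp invrK.
have big : forall j, (N < j)%N -> 1 < abs (y j).
  move=> j hj; rewrite habsy // exprn_egt1 ?ltr1n ?prime_gt1 //; by case: j hj.
have mix : forall i j, (i <= N)%N -> (N < j)%N -> y i <> y j.
  move=> i j hi hj e; have := hy i hi; rewrite e => h.
  by move: (lt_le_trans (big j hj) h); rewrite ltxx.
have yinj : injective y.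
  move=> i j e.
  have [hi|hi] := leqP i N; have [hj|hj] := leqP j N.
  - move: e; rewrite /y hi hj => e.
    have e2 : nth 0 s i = nth 0 s j.
      by rewrite -(divfK p_neq0 (nth 0 s i)) e divfK // p_neq0.
    by apply/eqP; rewrite -(nth_uniq 0 (leq_ltn_trans hi hsN) (leq_ltn_trans hj hsN) us) e2.
  - by case: (mix i j hi hj e).
  - by case: (mix j i hj hi (esym e)).
  - have := congr1 abs e; rewrite !habsy // => /eqP.
    rewrite -!natrX eqr_nat eqn_exp2l ?prime_gt1 //.
    by move/eqP.
apply: (@core y N hy c yinj h3).
move=> j hj eps eps0.
have [_ hs] := zx j hj.
have [M hM] := hs eps eps0.
exists M => k hk.
have := hM k hk; rewrite subr0.
congr (abs _ < _); apply: eq_bigr => i _.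
rewrite /c /y hj expr_div_n.
have hp : p%:R ^+ i != 0 :> L by apply: expf_neq0; apply: p_neq0.
have hf := fact_neq0 i.
field.
by rewrite hp hf.
Qed.

End S.

Theorem lemma2p4 (p : nat) (L : fieldType) (abs : L -> rat) :
  prime p -> odd p -> unram_padic_field p abs ->
  (forall a : nat -> L, integral_dp abs a -> (exists n, a n != 0) ->
     exists s : seq L, forall x, dp_zero abs a x -> x \in s) /\
  (forall k : nat, (1 <= k)%N ->
     forall b : nat -> L, integral_dp abs b -> reduction_nonzero p abs k b ->
     exists N : nat, forall a : nat -> L, integral_dp abs a ->
       same_reduction p abs k a b ->
       forall s : seq L, uniq s -> (forall x, x \in s -> dp_zero abs a x) ->
       (size s <= N)%N).
Proof.
move=> pp op [abs0 [absP [absM [absD [absp _]]]]].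
have p3 : (2 < p)%N.
  have p1 := prime_gt1 pp.
  have p2 : p != 2%N by apply/eqP => e; move: op; rewrite e.
  by lia.
have BM := bound_main p L abs pp abs0 absP absM absD absp p3.
split.
  move=> a ha [n hn].
  have [N0 hN0] := BM n (abs (a n)) (abs_gt0 p L abs pp absP (a n) hn).
  apply: (fin_list p L pp _ N0) => s us zs.
  exact: hN0 ha (lexx _) s us zs.
move=> k _ b hb [n hn].
have b0 : 0 < abs (b n).
  by apply: le_lt_trans hn; rewrite invr_ge0 exprn_ge0 // ler0n.
have [N0 hN0] := BM n (abs (b n)) b0.
exists N0 => a ha hab s us zs.
apply: hN0 ha _ s us zs.
have h := absD (a n) (b n - a n).
rewrite addrC subrK in h.
move: h; rewrite le_max => /orP [//|h].
have h2 : abs (b n - a n) < abs (b n).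
  by rewrite (absB p L abs pp absP absM); apply: le_lt_trans (hab n) hn.
by move: (le_lt_trans h h2); rewrite ltxx.
Qed.
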